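(* Let $D$ be a squarefree integer, not a perfect square, with $3\mid D$, and let $A,B\in\mathbb{Z}$ be such that $S^{(D;A,B)}$ is smooth, $A\equiv -D\pmod 9$ and $B\equiv 0\pmod 9$. Then $S^{(D;A,B)}(\mathbb{Q}_3)\neq\emptyset$, and $\mathrm{ev}_{\alpha,3}(\mathbf{t})=0$ for every $\mathbf{t}\in S^{(D;A,B)}(\mathbb{Q}_3)$.
   Context: $S^{(D;A,B)}\subset\mathbb{P}^4_{\mathbb{Q}}$ is defined by $t_0t_1=t_2^2-Dt_3^2$ and $(t_0+At_1)(t_0+Bt_1)=t_2^2-Dt_4^2$; smooth iff $AB\neq0$, $A\neq B$, $A^2-2AB+B^2-2A-2B+1\neq0$. For smooth such a surface, a place $v$ and $\mathbf{t}\in S(\mathbb{Q}_v)$, at least one of $t_0/(t_0+At_1)$, $t_1/(t_0+At_1)$, $t_0/(t_0+Bt_1)$, $t_1/(t_0+Bt_1)$ is defined and nonzero at $\mathbf{t}$; for such $q$, $\mathrm{ev}_{\alpha,v}(\mathbf{t})=0$ if the Hilbert symbol $(q,D)_v=1$ and $1/2$ otherwise, independently of the choice of $q$. *)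

(* Defs.v *)
From mathcomp Require Import all_boot all_order all_algebra.
From Stdlib Require Import ClassicalEpsilon.
Set Implicit Arguments. Unset Strict Implicit. Unset Printing Implicit Defensive.
Import Order.TTheory GRing.Theory Num.Theory.
Local Open Scope ring_scope.

(* An element of Z_3 is a compatible system of residues x_n mod 3^n,
   represented by integers with x_{n+1} = x_n (mod 3^n). *)
Definition Z3 := { x : nat -> int | forall n : nat,
  (x n.+1 = x n %[mod (3 ^ n)%N%:Z])%Z }.

Definition z3seq (x : Z3) : nat -> int := sval x.
Coercion z3seq : Z3 >-> Funclass.

(* Equality in Z_3 of two componentwise-defined compatible systems
   (ring operations on Z_3 act componentwise on residues). *)
Definition z3eq (f g : nat -> int) : Prop :=
  forall n : nat, (f n = g n %[mod (3 ^ n)%N%:Z])%Z.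

Definition z3nz (f : nat -> int) : Prop := ~ z3eq f (fun _ => 0).

(* A point of P^4(Q_3) is represented (after clearing denominators) by a
   nonzero 5-tuple of 3-adic integers; the equations are homogeneous. *)
Definition on_S (D A B : int) (t0 t1 t2 t3 t4 : Z3) : Prop :=
  [/\ z3nz t0 \/ z3nz t1 \/ z3nz t2 \/ z3nz t3 \/ z3nz t4,
      z3eq (fun n => t0 n * t1 n) (fun n => t2 n ^+ 2 - D * t3 n ^+ 2) &
      z3eq (fun n => (t0 n + A * t1 n) * (t0 n + B * t1 n))
           (fun n => t2 n ^+ 2 - D * t4 n ^+ 2)].

Definition smooth_params (A B : int) : Prop :=
  [/\ A * B != 0, A != B & A ^+ 2 - 2 * A * B + B ^+ 2 - 2 * A - 2 * B + 1 != 0].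

(* For q = a / b in Q_3^* (a, b in Z_3 nonzero), (q, D)_3 = 1 iff
   z^2 = q x^2 + D y^2 has a nonzero solution in Q_3^3; clearing
   denominators, iff b z^2 = a x^2 + b D y^2 has a nonzero solution in Z_3^3. *)
Definition hilbert3_is_one (a b : nat -> int) (D : int) : Prop :=
  exists x y z : Z3, (z3nz x \/ z3nz y \/ z3nz z) /\
    z3eq (fun n => b n * z n ^+ 2)
         (fun n => a n * x n ^+ 2 + b n * D * y n ^+ 2).

Definition pdec (P : Prop) : bool :=
  if excluded_middle_informative P then true else false.

(* ev_{alpha,3}(t): take the first of
     t0/(t0+A t1), t1/(t0+A t1), t0/(t0+B t1), t1/(t0+B t1)
   which is defined (denominator nonzero) and nonzero at t, and return 0 if
   its Hilbert symbol with D is 1, and 1/2 otherwise.  (Default 1/2 if none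
   qualifies; this never happens on S.) *)
Definition ev_alpha3 (D A B : int) (t0 t1 t2 t3 t4 : Z3) : rat :=
  let dA : nat -> int := fun n => t0 n + A * t1 n in
  let dB : nat -> int := fun n => t0 n + B * t1 n in
  let cands : seq ((nat -> int) * (nat -> int)) :=
    [:: (z3seq t0, dA); (z3seq t1, dA); (z3seq t0, dB); (z3seq t1, dB)] in
  let valid (q : (nat -> int) * (nat -> int)) :=
    pdec (z3nz q.1 /\ z3nz q.2) in
  match [seq q <- cands | valid q] with
  | q :: _ => if pdec (hilbert3_is_one q.1 q.2 D) then 0 else 1 / 2
  | [::] => 1 / 2
  end.

Definition int_squarefree (D : int) : Prop :=
  forall m : int, (m * m %| D)%Z -> `|m| = 1.

Definition int_is_square (D : int) : Prop := exists m : int, D = m * m.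

(* Main.v *)
Require Import Defs.
From mathcomp Require Import all_boot all_order all_algebra.
From mathcomp Require Import zify ring.
From Stdlib Require Import Classical ClassicalEpsilon.
Import Order.TTheory GRing.Theory Num.Theory.
Local Open Scope ring_scope.

Definition pw (n : nat) : int := (3 ^ n)%N%:Z.
Lemma pw0 : pw 0 = 1. Proof. by []. Qed.
Lemma pwS n : pw n.+1 = 3 * pw n. Proof. by rewrite /pw expnS PoszM. Qed.
Lemma pwD m n : pw (m + n) = pw m * pw n. Proof. by rewrite /pw expnD PoszM. Qed.
Lemma pw_neq0 n : pw n != 0. Proof. by rewrite /pw eqz_nat expn_eq0. Qed.
Lemma pw_dvd m n : (m <= n)%N -> (pw m %| pw n)%Z.
Proof. move=> h; rewrite -(subnK h) pwD; exact: dvdz_mull. Qed.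

Lemma dvdD {d a b : int} : (d %| a)%Z -> (d %| b)%Z -> (d %| a + b)%Z.
Proof. by move=> *; apply: rpredD. Qed.
Lemma dvdB {d a b : int} : (d %| a)%Z -> (d %| b)%Z -> (d %| a - b)%Z.
Proof. by move=> *; apply: rpredB. Qed.
Lemma dvdML {d} (a : int) {b} : (d %| b)%Z -> (d %| a * b)%Z.
Proof. exact: dvdz_mull. Qed.
Lemma dvd_eq {d a b : int} : (d %| a)%Z -> a = b -> (d %| b)%Z.
Proof. by move=> h <-. Qed.

Lemma dvd3M (a b : int) : (3 %| a * b)%Z -> (3 %| a)%Z \/ (3 %| b)%Z.
Proof.
rewrite !dvdzE abszM Euclid_dvdM //.
by case/orP; [left|right].
Qed.
Lemma ndvd3M {a b : int} : ~ (3 %| a)%Z -> ~ (3 %| b)%Z -> ~ (3 %| a * b)%Z.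
Proof. by move=> ha hb /dvd3M [] //. Qed.
Lemma ndvd3_1 : ~ (3 %| (1:int))%Z. Proof. by []. Qed.
Lemma ndvd3_sub {a b : int} : (3 %| a - b)%Z -> ~ (3 %| b)%Z -> ~ (3 %| a)%Z.
Proof.
move=> hab hb ha; apply: hb.
have -> : b = a - (a - b) by ring.
exact: dvdB.
Qed.

Lemma mod3 (x : int) : exists q, x = 3 * q \/ x = 3 * q + 1 \/ x = 3 * q - 1.
Proof.
have e := divz_eq x 3.
have h1 : (0 <= x %% 3)%Z by apply: modz_ge0.
have h2 : (x %% 3 < 3)%Z by apply: ltz_pmod.
set q := (x %/ 3)%Z in e *; set r := (x %% 3)%Z in e h1 h2 *.
have : r = 0 \/ r = 1 \/ r = 2 by lia.
case=> [hr|[hr|hr]]; rewrite hr in e.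
- by exists q; left; rewrite e; ring.
- by exists q; right; left; rewrite e; ring.
- by exists (q + 1); right; right; rewrite e; ring.
Qed.

Lemma sq1 (x : int) : ~ (3 %| x)%Z -> (3 %| x ^+ 2 - 1)%Z.
Proof.
case: (mod3 x) => q [->|[->|->]].
- by move=> h; exfalso; apply: h; apply: dvdz_mulr; exact: dvdzz.
- move=> _; apply/dvdzP; exists (3 * q ^+ 2 + 2 * q); ring.
- move=> _; apply/dvdzP; exists (3 * q ^+ 2 - 2 * q); ring.
Qed.

Definition cp (f : nat -> int) := forall n, (pw n %| f n.+1 - f n)%Z.

Lemma z3eqP f g : z3eq f g <-> forall n, (pw n %| f n - g n)%Z.
Proof.
split=> h n; first by have := h n; move/eqP; rewrite eqz_mod_dvd.
by apply/eqP; rewrite eqz_mod_dvd; apply: h.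
Qed.

Lemma cpZ3 (x : Z3) : cp x.
Proof. move=> n; case: x => f hf /=; have := hf n; move/eqP; rewrite eqz_mod_dvd. done. Qed.

Lemma cp_Z3 f : cp f -> forall n : nat, (f n.+1 = f n %[mod (3 ^ n)%N%:Z])%Z.
Proof. by move=> h n; apply/eqP; rewrite eqz_mod_dvd; apply: h. Qed.

Definition mkZ3 {f} (h : cp f) : Z3 := exist _ f (@cp_Z3 f h).

Lemma cpC c : cp (fun _ => c). Proof. by move=> n; rewrite subrr dvdz0. Qed.
Lemma cpD {f g} : cp f -> cp g -> cp (fun n => f n + g n).
Proof. move=> hf hg n /=; have h := dvdD (hf n) (hg n); apply: (dvd_eq h); ring. Qed.
Lemma cpM {f g} : cp f -> cp g -> cp (fun n => f n * g n).
Proof.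
move=> hf hg n /=.
have h := dvdD (dvdML (f n.+1) (hg n)) (dvdML (g n) (hf n)); apply: (dvd_eq h); ring.
Qed.
Lemma cpN {f} : cp f -> cp (fun n => - f n).
Proof. move=> hf n /=; have h := dvdML (-1) (hf n); apply: (dvd_eq h); ring. Qed.

Lemma z3_lin0 (P Q : nat -> int) : (forall n, P n = Q n) -> z3eq P Q.
Proof. by move=> h; apply/z3eqP=> n; rewrite h subrr dvdz0. Qed.

Lemma z3_lin1 l1 {f1 g1 P Q : nat -> int} : z3eq f1 g1 ->
  (forall n, P n - Q n = l1 n * (f1 n - g1 n)) -> z3eq P Q.
Proof.
move=> /z3eqP h1 h; apply/z3eqP=> n; rewrite h; exact: dvdML.
Qed.

Lemma z3_lin2 l1 l2 {f1 g1 f2 g2 P Q : nat -> int} : z3eq f1 g1 -> z3eq f2 g2 ->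
  (forall n, P n - Q n = l1 n * (f1 n - g1 n) + l2 n * (f2 n - g2 n)) -> z3eq P Q.
Proof.
move=> /z3eqP h1 /z3eqP h2 h; apply/z3eqP=> n; rewrite h.
by apply: dvdD; apply: dvdML.
Qed.

Lemma z3_lin3 l1 l2 l3 {f1 g1 f2 g2 f3 g3 P Q : nat -> int} :
  z3eq f1 g1 -> z3eq f2 g2 -> z3eq f3 g3 ->
  (forall n, P n - Q n = l1 n * (f1 n - g1 n) + l2 n * (f2 n - g2 n)
     + l3 n * (f3 n - g3 n)) -> z3eq P Q.
Proof.
move=> /z3eqP h1 /z3eqP h2 /z3eqP h3 h; apply/z3eqP=> n; rewrite h.
by apply: dvdD; [apply: dvdD|]; apply: dvdML.
Qed.

Lemma z3_lin4 l1 l2 l3 l4 {f1 g1 f2 g2 f3 g3 f4 g4 P Q : nat -> int} :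
  z3eq f1 g1 -> z3eq f2 g2 -> z3eq f3 g3 -> z3eq f4 g4 ->
  (forall n, P n - Q n = l1 n * (f1 n - g1 n) + l2 n * (f2 n - g2 n)
     + l3 n * (f3 n - g3 n) + l4 n * (f4 n - g4 n)) -> z3eq P Q.
Proof.
move=> /z3eqP h1 /z3eqP h2 /z3eqP h3 /z3eqP h4 h; apply/z3eqP=> n; rewrite h.
by apply: dvdD; [apply: dvdD; [apply: dvdD|]|]; apply: dvdML.
Qed.

Lemma z3eq_sym {f g} : z3eq f g -> z3eq g f.
Proof. move=> h; apply: (z3_lin1 (fun _ => -1) h) => n; ring. Qed.

Lemma z3nz_eq {f g} : z3eq f g -> z3nz g -> z3nz f.
Proof.
move=> h hg hf; apply: hg; apply: (z3_lin2 (fun _ => -1) (fun _ => 1) h hf) => n; ring.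
Qed.

Definition un (f : nat -> int) := ~ (3 %| f 1%N)%Z.

Lemma cp_3 {f} n : cp f -> (0 < n)%N -> (3 %| f n.+1 - f n)%Z.
Proof.
move=> hf hn; apply: dvdz_trans (hf n).
have h := @pw_dvd 1 n hn; by rewrite pwS pw0 mulr1 in h.
Qed.

Lemma un_all {f} : cp f -> un f -> forall n, (0 < n)%N -> ~ (3 %| f n)%Z.
Proof.
move=> hf hu; elim=> // n IH _.
case: n IH => [_|n IH]; first exact: hu.
apply: (ndvd3_sub (@cp_3 f n.+1 hf isT)); exact: IH.
Qed.

Lemma dv_all {f} : cp f -> (3 %| f 1%N)%Z -> forall n, (0 < n)%N -> (3 %| f n)%Z.
Proof.
move=> hf hu; elim=> // n IH _.
case: n IH => [_|n IH]; first exact: hu.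
have := dvdD (@cp_3 f n.+1 hf isT) (IH isT).
by rewrite subrK.
Qed.

Lemma nz_pw k {u} : cp u -> un u -> z3nz (fun n => pw k * u n).
Proof.
move=> hc hu /z3eqP /(_ k.+1); rewrite subr0 pwS.
have -> : 3 * pw k = pw k * 3 by rewrite mulrC.
rewrite dvdz_mul2l ?pw_neq0 //.
exact: (un_all hc hu k.+1 isT).
Qed.

Lemma un_nz {u} : cp u -> un u -> z3nz u.
Proof.
move=> hc hu; refine (z3nz_eq _ (nz_pw 0 hc hu)).
by apply: z3_lin0 => n; rewrite pw0 mul1r.
Qed.

Lemma step_int {P c k r : int} : ~ (3 %| c)%Z -> ~ (3 %| r)%Z ->
  (P %| c * r ^+ 2 - k)%Z -> (3 %| c * r ^+ 2 - k)%Z ->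
  (P * 3 %| c * (r + (c * r ^+ 2 - k) * c * r) ^+ 2 - k)%Z /\
  ~ (3 %| r + (c * r ^+ 2 - k) * c * r)%Z.
Proof.
move=> hc hr hP h3; set E := c * r ^+ 2 - k.
split.
  have -> : c * (r + E * c * r) ^+ 2 - k
      = E * (2 * ((c * r) ^+ 2 - 1) + 3 + E * c ^+ 3 * r ^+ 2) by rewrite /E; ring.
  apply: dvdz_mul => //.
  apply: dvdD; last by apply: dvdz_mulr; apply: dvdz_mulr.
  apply: dvdD; last exact: dvdzz.
  apply: dvdML; apply: sq1; exact: ndvd3M.
move=> h; apply: hr.
have hh := dvdB h (dvdz_mulr r (dvdz_mulr c h3)).
by apply: (dvd_eq hh); rewrite /E; ring.
Qed.

Fixpoint hr (c k : nat -> int) (n : nat) : int :=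
  match n with
  | 0 => 1
  | m.+1 => hr c k m + (c m.+1 * hr c k m ^+ 2 - k m.+1) * c m.+1 * hr c k m
  end.

Lemma hr_inv {c k} : cp c -> cp k -> un c -> (3 %| c 1%N - k 1%N)%Z ->
  forall n, ~ (3 %| hr c k n)%Z /\ (pw n %| c n * hr c k n ^+ 2 - k n)%Z.
Proof.
move=> hc hk hu h1; elim=> [|n [IH1 IH2]].
  by split; [exact: ndvd3_1 | rewrite pw0 dvd1z].
have hE : (pw n %| c n.+1 * hr c k n ^+ 2 - k n.+1)%Z.
  have h := dvdB (dvdD IH2 (dvdML (hr c k n ^+ 2) (hc n))) (hk n).
  by apply: (dvd_eq h); ring.
have h3 : (3 %| c n.+1 * hr c k n ^+ 2 - k n.+1)%Z.
  case: n IH1 IH2 hE => [|n] IH1 IH2 hE.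
    by rewrite /= expr1n mulr1.
  apply: dvdz_trans hE; have h := @pw_dvd 1 n.+1 isT; by rewrite [pw 1]pwS pw0 mulr1 in h.
have [hA hB] := step_int (un_all hc hu n.+1 isT) IH1 hE h3.
by split => //=; rewrite pwS [3 * _]mulrC.
Qed.

Lemma hensel c k : cp c -> cp k -> un c -> (3 %| c 1%N - k 1%N)%Z ->
  exists r, cp r /\ un r /\ z3eq (fun n => c n * r n ^+ 2) k.
Proof.
move=> hc hk hu h1; have hi := hr_inv hc hk hu h1.
exists (hr c k); split; last split.
- move=> n /=.
  have [_ h] := hi n.
  have hE : (pw n %| c n.+1 * hr c k n ^+ 2 - k n.+1)%Z.
    have h' := dvdB (dvdD h (dvdML (hr c k n ^+ 2) (hc n))) (hk n).
    by apply: (dvd_eq h'); ring.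
  have h' := dvdz_mulr (c n.+1 * hr c k n) hE.
  by apply: (dvd_eq h'); ring.
- by have [] := hi 1%N.
- by apply/z3eqP => n; have [] := hi n.
Qed.

Lemma dec_aux n : forall x, cp x -> ~ (pw n %| x n)%Z ->
  exists k u, cp u /\ un u /\ z3eq x (fun m => pw k * u m).
Proof.
elim: n => [|n IH] x hx hn.
  by exfalso; apply: hn; rewrite pw0 dvd1z.
case: (classic (3 %| x 1%N)%Z) => h1; last first.
  exists 0%N, x; split => //; split => //.
  by apply: z3_lin0 => m; rewrite pw0 mul1r.
pose x' m := (x m.+1 %/ 3)%Z.
have hx' m : x m.+1 = 3 * x' m by rewrite /x' mulrC divzK //; exact: dv_all.
have cx' : cp x'.
  move=> m; have := hx m.+1; rewrite hx' hx' pwS -mulrBr.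
  by rewrite dvdz_mul2l.
have nx' : ~ (pw n %| x' n)%Z.
  by move=> h; apply: hn; rewrite hx' pwS dvdz_mul2l.
have [k [u [cu [uu eu]]]] := IH x' cx' nx'.
exists k.+1, u; split => //; split => //.
apply/z3eqP => m.
have h := dvdD (dvdML (-1) (hx m)) (dvdML 3 (dvd_eq (proj1 (z3eqP _ _) eu m) (erefl _))).
apply: (dvd_eq h); rewrite hx' pwS; ring.
Qed.

Lemma dec {x} : cp x -> z3eq x (fun _ => 0) \/
  exists k u, cp u /\ un u /\ z3eq x (fun m => pw k * u m).
Proof.
move=> hx; case: (classic (z3eq x (fun _ => 0))) => h; [by left | right].
have [n hn] : exists n, ~ (pw n %| x n)%Z.
  apply: NNPP => hne; apply: h; apply/z3eqP => n; rewrite subr0.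
  by apply: NNPP => hn; apply: hne; exists n.
exact: (dec_aux n x hx hn).
Qed.

Lemma val_lt {k m u v} : cp u -> un u -> (k < m)%N ->
  ~ z3eq (fun n => pw k * u n) (fun n => pw m * v n).
Proof.
move=> cu uu hkm /z3eqP /(_ k.+1) h.
have h2 := dvdD h (dvdz_mulr (v k.+1) (@pw_dvd k.+1 m hkm)).
have : (pw k.+1 %| pw k * u k.+1)%Z by apply: (dvd_eq h2); ring.
rewrite pwS [3 * _]mulrC.
rewrite dvdz_mul2l ?pw_neq0 //; exact: (un_all cu uu k.+1 isT).
Qed.

Lemma unM {u v} : un u -> un v -> un (fun n => u n * v n).
Proof. by move=> hu hv; apply: ndvd3M. Qed.
Lemma unN {u} : un u -> un (fun n => - u n).
Proof. by move=> hu; rewrite /un rpredN. Qed.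
Lemma unC {c} : ~ (3 %| c)%Z -> un (fun _ => c).
Proof. by []. Qed.

Lemma N0 D d x y : D = 3 * d -> ~ (3 %| d)%Z -> cp x -> cp y ->
  z3eq (fun n => x n ^+ 2 - D * y n ^+ 2) (fun _ => 0) ->
  z3eq x (fun _ => 0) /\ z3eq y (fun _ => 0).
Proof.
move=> hD hd cx cy h.
case: (dec cy) => [hy|[m [v [cv [uv ev]]]]].
  have hx2 : z3eq (fun n => x n ^+ 2) (fun _ => 0).
    by apply: (z3_lin2 (fun _ => 1) (fun n => D * y n) h hy) => n /=; ring.
  case: (dec cx) => [hx|[k [u [cu [uu eu]]]]]; first by [].
  exfalso; apply: (nz_pw (k + k) (cpM cu cu) (unM uu uu)).
  apply: (z3_lin2 (fun n => - (x n + pw k * u n)) (fun _ => 1) eu hx2) => n /=.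
  rewrite pwD; ring.
case: (dec cx) => [hx|[k [u [cu [uu eu]]]]].
  exfalso.
  have cw : cp (fun n => - (d * (v n * v n))) by apply: cpN; apply: cpM; [apply: cpC|apply: cpM].
  have uw : un (fun n => - (d * (v n * v n))) by apply: unN; apply: unM; [apply: unC|apply: unM].
  apply: (nz_pw (m + m).+1 cw uw).
  apply: (z3_lin3 (fun _ => 1) (fun n => - x n) (fun n => D * (y n + pw m * v n)) h hx ev) => n /=.
  rewrite pwS pwD hD; ring.
exfalso.
have cw : cp (fun n => d * (v n * v n)) by apply: cpM; [apply: cpC|apply: cpM].
have uw : un (fun n => d * (v n * v n)) by apply: unM; [apply: unC|apply: unM].
have e : z3eq (fun n => pw (k + k) * (u n * u n)) (fun n => pw (m + m).+1 * (d * (v n * v n))).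
  apply: (z3_lin3 (fun n => - (x n + pw k * u n)) (fun _ => 1) (fun n => D * (y n + pw m * v n)) eu h ev) => n /=.
  rewrite pwS !pwD hD; ring.
have [hlt|hgt] : (k + k < (m + m).+1)%N \/ ((m + m).+1 < k + k)%N by lia.
  exact: (val_lt (cpM cu cu) (unM uu uu) hlt e).
exact: (val_lt cw uw hgt (z3eq_sym e)).
Qed.

Lemma pdecT {P : Prop} : P -> pdec P = true.
Proof. by rewrite /pdec; case: excluded_middle_informative. Qed.
Lemma pdecF {P : Prop} : ~ P -> pdec P = false.
Proof. by rewrite /pdec; case: excluded_middle_informative. Qed.

Theorem lemma5p2 (D A B : int) :
  int_squarefree D -> ~ int_is_square D -> (3 %| D)%Z ->
  smooth_params A B ->
  (A = - D %[mod 9])%Z -> (B = 0 %[mod 9])%Z ->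
  (exists t0 t1 t2 t3 t4 : Z3, on_S D A B t0 t1 t2 t3 t4) /\
  (forall t0 t1 t2 t3 t4 : Z3, on_S D A B t0 t1 t2 t3 t4 ->
     ev_alpha3 D A B t0 t1 t2 t3 t4 = 0).
Proof.
move=> hsq _ /dvdzP [d hD] _ /eqP hA /eqP hB.
rewrite eqz_mod_dvd in hA; rewrite eqz_mod_dvd subr0 in hB.
case/dvdzP: hA => j hA; case/dvdzP: hB => b hB.
have hd : ~ (3 %| d)%Z.
  move=> h; have := hsq 3; rewrite hD => /(_ (dvdz_mul h (dvdzz 3))); done.
have eA : A = 3 * (3 * j - d) by rewrite -[A](subrK (- D)) hA hD; ring.
have eB : B = 9 * b by rewrite hB; ring.
have eD : D = 3 * d by rewrite hD; ring.
clear hA hB hD hsq.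
subst A B D.
set a := 3 * j - d.
have ha : ~ (3 %| a)%Z.
  move=> h; apply: hd; have h' := dvdB (dvdz_mulr j (dvdzz 3)) h.
  by apply: (dvd_eq h'); rewrite /a; ring.
split.
  set K := a + 3 * b + 9 * b * a.
  have hK : (3 %| - d - K)%Z.
    have h := dvdz_mull (- j - b - 3 * b * a) (dvdzz 3).
    by apply: (dvd_eq h); rewrite /K /a; ring.
  have [r [cr [ur er]]] := @hensel (fun _ => - d) (fun _ => K) (cpC _) (cpC _)
     (unN (unC hd)) hK.
  exists (mkZ3 (cpC 1)), (mkZ3 (cpC 1)), (mkZ3 (cpC 1)), (mkZ3 (cpC 0)), (mkZ3 cr).
  split.
  - left; exact: (un_nz (cpC 1) (unC ndvd3_1)).
  - by apply: z3_lin0 => n /=; ring.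
  - apply: (z3_lin1 (fun _ => -3) er) => n /=.
    rewrite /K /a; ring.
move=> t0 t1 t2 t3 t4 [hnz E1 E2].
have c0 := cpZ3 t0; have c1 := cpZ3 t1; have c2 := cpZ3 t2; have c3 := cpZ3 t3; have c4 := cpZ3 t4.
have cA : cp (fun n => t0 n + 3 * a * t1 n) by apply: cpD c0 (cpM (cpC _) c1).
have cB : cp (fun n => t0 n + 9 * b * t1 n) by apply: cpD c0 (cpM (cpC _) c1).
have ndB : ~ (3 %| 3 * b - a)%Z.
  move=> h; apply: ha; have h' := dvdB (dvdz_mulr b (dvdzz 3)) h.
  by apply: (dvd_eq h'); ring.
have n01 : ~ (z3eq t0 (fun _ => 0) /\ z3eq t1 (fun _ => 0)).
  case=> h0 h1.
  have N1 : z3eq (fun n => t2 n ^+ 2 - 3 * d * t3 n ^+ 2) (fun _ => 0).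
    by apply: (z3_lin2 (fun _ => -1) (fun n => t1 n) E1 h0) => n /=; ring.
  have N2 : z3eq (fun n => t2 n ^+ 2 - 3 * d * t4 n ^+ 2) (fun _ => 0).
    apply: (z3_lin3 (fun _ => -1) (fun n => t0 n + 9 * b * t1 n)
       (fun n => 3 * a * (t0 n + 9 * b * t1 n)) E2 h0 h1) => n /=; ring.
  have [z2 z3] := @N0 (3 * d) d t2 t3 (erefl _) hd c2 c3 N1.
  have [_ z4] := @N0 (3 * d) d t2 t4 (erefl _) hd c2 c4 N2.
  by case: hnz => [|[|[|[]]]]; apply.
rewrite /ev_alpha3 /=.
case: (classic (z3eq t0 (fun _ => 0))) => h0.
  have nz1 : z3nz t1 by move=> h1; exact: n01.
  have [h1|[k [u [cu [uu eu]]]]] := dec c1; first by [].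
  have nzA : z3nz (fun n => t0 n + 3 * a * t1 n).
    have cw : cp (fun n => a * u n) by apply: cpM (cpC _) cu.
    have uw : un (fun n => a * u n) by apply: unM (unC ha) uu.
    refine (z3nz_eq _ (nz_pw k.+1 cw uw)).
    apply: (z3_lin2 (fun _ => 1) (fun _ => 3 * a) h0 eu) => n /=.
    rewrite pwS; ring.
  have nc1 : ~ (z3nz t0 /\ z3nz (fun n => t0 n + 3 * a * t1 n)) by case.
  rewrite (pdecF nc1) (pdecT (conj nz1 nzA)) /=.
  rewrite pdecT //.
  have hk : (3 %| 1 - - (a * d))%Z.
    have h := dvdB (dvdz_mull j (dvdz_mull d (dvdzz 3))) (@sq1 d hd).
    by apply: (dvd_eq h); rewrite /a; ring.
  have [s [cs [us es]]] := @hensel (fun _ => 1) (fun _ => - (a * d)) (cpC _) (cpC _)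
     (unC ndvd3_1) hk.
  exists (mkZ3 (cpM (cpC 3) cs)), (mkZ3 (cpC 1)), (mkZ3 (cpC 0)).
  split; first by right; left; exact: (un_nz (cpC 1) (unC ndvd3_1)).
  apply: (z3_lin2 (fun n => -9 * t1 n) (fun _ => -3 * d) es h0) => n /=.
  rewrite /a; ring.
have nz0 : z3nz t0 by [].
case: (classic (z3eq (fun n => t0 n + 3 * a * t1 n) (fun _ => 0))) => hA.
  have nz1 : z3nz t1.
    move=> h1; apply: nz0.
    by apply: (z3_lin2 (fun _ => 1) (fun _ => - (3 * a)) hA h1) => n /=; ring.
  have [h1|[k [u [cu [uu eu]]]]] := dec c1; first by [].
  have nzB : z3nz (fun n => t0 n + 9 * b * t1 n).
    have cw : cp (fun n => (3 * b - a) * u n) by apply: cpM (cpC _) cu.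
    have uw : un (fun n => (3 * b - a) * u n) by apply: unM (unC ndB) uu.
    refine (z3nz_eq _ (nz_pw k.+1 cw uw)).
    apply: (z3_lin2 (fun _ => 1) (fun _ => 9 * b - 3 * a) hA eu) => n /=.
    rewrite pwS; ring.
  have nc1 : ~ (z3nz t0 /\ z3nz (fun n => t0 n + 3 * a * t1 n)) by case.
  have nc2 : ~ (z3nz t1 /\ z3nz (fun n => t0 n + 3 * a * t1 n)) by case.
  rewrite (pdecF nc1) (pdecF nc2) (pdecT (conj nz0 nzB)) /=.
  rewrite pdecT //.
  have nc : ~ (3 %| a - 3 * b)%Z.
    move=> h; apply: ha; have h' := dvdD h (dvdz_mull b (dvdzz 3)).
    by apply: (dvd_eq h'); ring.
  have hk : (3 %| (a - 3 * b) - a)%Z.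
    have h := dvdz_mull (- b) (dvdzz 3).
    by apply: (dvd_eq h); ring.
  have [z [cz [uz ez]]] := @hensel (fun _ => a - 3 * b) (fun _ => a) (cpC _) (cpC _)
     (unC nc) hk.
  exists (mkZ3 (cpC 1)), (mkZ3 (cpC 0)), (mkZ3 cz).
  split; first by left; exact: (un_nz (cpC 1) (unC ndvd3_1)).
  apply: (z3_lin2 (fun n => z n ^+ 2 - 1) (fun n => -3 * t1 n) hA ez) => n /=.
  ring.
rewrite (pdecT (conj nz0 hA)) /= pdecT //.
case: (classic (z3eq t1 (fun _ => 0))) => h1.
  exists (mkZ3 (cpC 1)), (mkZ3 (cpC 0)), (mkZ3 (cpC 1)).
  split; first by left; exact: (un_nz (cpC 1) (unC ndvd3_1)).
  by apply: (z3_lin1 (fun _ => 3 * a) h1) => n /=; ring.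
have [//|[al [u0 [cu0 [uu0 e0]]]]] := dec c0.
have [//|[be [u1 [cu1 [uu1 e1]]]]] := dec c1.
case: (leqP al be) => hab.
  set e := (be - al)%N.
  have hbe : be = (al + e)%N by rewrite /e subnKC.
  set c := fun n => u0 n + 3 * pw e * a * u1 n.
  have cc : cp c by apply: cpD cu0 (cpM (cpC _) cu1).
  have hk : (3 %| c 1%N - u0 1%N)%Z.
    have h := dvdz_mull (pw e * a * u1 1%N) (dvdzz 3).
    by apply: (dvd_eq h); rewrite /c; ring.
  have uc : un c by apply: (ndvd3_sub hk).
  have [r [cr [ur er]]] := @hensel c u0 cc cu0 uc hk.
  exists (mkZ3 (cpC 1)), (mkZ3 (cpC 0)), (mkZ3 cr).
  split; first by left; exact: (un_nz (cpC 1) (unC ndvd3_1)).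
  apply: (z3_lin3 (fun n => r n ^+ 2 - 1) (fun n => 3 * a * r n ^+ 2) (fun _ => pw al)
     e0 e1 er) => n /=.
  rewrite /c hbe pwD; ring.
have [hal|hlt] : al = be.+1 \/ (be.+2 <= al)%N by lia.
  set dd := fun n => u0 n + 3 * b * u1 n.
  have cdd : cp dd by apply: cpD cu0 (cpM (cpC _) cu1).
  have hk : (3 %| dd 1%N - u0 1%N)%Z.
    have h := dvdz_mull (b * u1 1%N) (dvdzz 3).
    by apply: (dvd_eq h); rewrite /dd; ring.
  have udd : un dd by apply: (ndvd3_sub hk).
  have [s [cs [us es]]] := @hensel dd u0 cdd cu0 udd hk.
  exists (mkZ3 cA), (mkZ3 (cpM c4 cs)), (mkZ3 (cpM c2 cs)).
  split; first by left; exact: hA.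
  apply: (z3_lin4 (fun n => - (t0 n + 3 * a * t1 n) * s n ^+ 2)
     (fun n => (t0 n + 3 * a * t1 n) ^+ 2 * (s n ^+ 2 - 1))
     (fun n => 9 * b * (t0 n + 3 * a * t1 n) ^+ 2 * s n ^+ 2)
     (fun n => 3 * pw be * (t0 n + 3 * a * t1 n) ^+ 2)
     E2 e0 e1 es) => n /=.
  rewrite /dd hal pwS; ring.
set e := (al - be.+2)%N.
have hal : al = (be + e).+2 by rewrite /e; lia.
set c := fun n => 3 * pw e * u0 n + a * u1 n.
have cc : cp c by apply: cpD (cpM (cpC _) cu0) (cpM (cpC _) cu1).
set c' := fun n => - d * c n * u1 n.
have cc' : cp c' by apply: cpM (cpM (cpC _) cc) cu1.
have hk : (3 %| c' 1%N - 1)%Z.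
  have h := dvdB (@sq1 (d * u1 1%N) (ndvd3M hd uu1))
     (dvdz_mull (d * pw e * u0 1%N * u1 1%N + d * j * u1 1%N ^+ 2) (dvdzz 3)).
  by apply: (dvd_eq h); rewrite /c' /c /a; ring.
have uc' : un c' by apply: (ndvd3_sub hk ndvd3_1).
have [r [cr [ur er]]] := @hensel c' (fun _ => 1) cc' (cpC _) uc' hk.
exists (mkZ3 (cpC (3 * pw be))), (mkZ3 (cpM c2 cr)), (mkZ3 (cpM (cpM (cpC (3 * d)) c3) cr)).
split.
  left; refine (z3nz_eq _ (nz_pw be.+1 (cpC 1) (unC ndvd3_1))).
  by apply: z3_lin0 => n /=; rewrite pwS; ring.
apply: (z3_lin4 (fun n => 3 * d * (t0 n + 3 * a * t1 n) * r n ^+ 2)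
   (fun n => - t0 n * (3 * d) * r n ^+ 2 * t1 n)
   (fun n => - t0 n * (3 * a * (3 * d) * r n ^+ 2 * t1 n + 3 * (3 * d) * pw be * c n * r n ^+ 2))
   (fun n => 9 * t0 n * pw be ^+ 2)
   E1 e0 e1 er) => n /=.
rewrite /c' /c hal !pwS pwD; ring.
Qed.
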